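(* Let $F$ be a Banach lattice, $H\subset F$ a subspace and $0<r\le1$. Then $H$ contains no pair $e,f$ of unit vectors with $\||e|\wedge|f|\|<r$ if and only if $H$ has the $\frac1r$-SPR property, i.e. $\min(\|g+h\|,\|g-h\|)\le\frac1r\,\||g|-|h|\|$ for all $g,h\in H$.
   Context: For $s\ge1$, a subspace $H$ of a Banach lattice has the $s$-stable phase retrieval ($s$-SPR) property if $\|g+h\|\wedge\|g-h\|\le s\,\||g|-|h|\|$ for all $g,h\in H$. *)

(* Defs.v *)
From mathcomp Require Import all_boot all_order all_algebra.
From mathcomp Require Import all_classical all_reals all_analysis.
Set Implicit Arguments. Unset Strict Implicit. Unset Printing Implicit Defensive.
Import Order.TTheory GRing.Theory Num.Theory.
Import numFieldNormedType.Exports.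
Local Open Scope classical_set_scope.
Local Open Scope ring_scope.

Section BanachLattice.
Variables (R : realType) (V : completeNormedModType R).
Variables (join meet : V -> V -> V).

Definition bl_le (x y : V) : Prop := join x y = y.

Definition bl_abs (x : V) : V := join x (- x).

Definition is_banach_lattice : Prop :=
  (forall x y, join x y = join y x) /\
      (forall x y, meet x y = meet y x) /\
      (forall x y z, join x (join y z) = join (join x y) z) /\
      (forall x y z, meet x (meet y z) = meet (meet x y) z) /\
      (forall x y, join x (meet x y) = x) /\
      (forall x y, meet x (join x y) = x) /\
      (forall x y z, bl_le x y -> bl_le (x + z) (y + z)) /\
      (forall (a : R) x, 0 <= a -> bl_le 0 x -> bl_le 0 (a *: x)) /\
      (forall x y, bl_le (bl_abs x) (bl_abs y) -> `|x| <= `|y|).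

Definition is_subspace (H : set V) : Prop :=
  [/\ H 0,
      (forall x y, H x -> H y -> H (x + y)) &
      (forall (a : R) x, H x -> H (a *: x))].

Definition SPR (s : R) (H : set V) : Prop :=
  forall g h, H g -> H h ->
    Num.min `|g + h| `|g - h| <= s * `|bl_abs g - bl_abs h|.

End BanachLattice.

(* Main.v *)
Require Import Defs.
From mathcomp Require Import all_boot all_order all_algebra.
From mathcomp Require Import all_classical all_reals all_analysis.
Import Order.TTheory GRing.Theory Num.Theory.
Import numFieldNormedType.Exports.
Local Open Scope classical_set_scope.
Local Open Scope ring_scope.

Section Riesz.
Context (R : realType) (V : completeNormedModType R) (join meet : V -> V -> V).
Context (HBL : is_banach_lattice join meet).

Local Notation le := (bl_le join).
Local Notation ab := (bl_abs join).

Let joinC : forall x y, join x y = join y x. Proof. by case: HBL. Qed.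
Let meetC : forall x y, meet x y = meet y x. Proof. by case: HBL => _ []. Qed.
Let joinA : forall x y z, join x (join y z) = join (join x y) z.
Proof. by case: HBL => _ [] _ []. Qed.
Let meetA : forall x y z, meet x (meet y z) = meet (meet x y) z.
Proof. by case: HBL => _ [] _ [] _ []. Qed.
Let joinKI : forall x y, join x (meet x y) = x.
Proof. by case: HBL => _ [] _ [] _ [] _ []. Qed.
Let meetKU : forall x y, meet x (join x y) = x.
Proof. by case: HBL => _ [] _ [] _ [] _ [] _ []. Qed.
Let le_add : forall x y z, le x y -> le (x + z) (y + z).
Proof. by case: HBL => _ [] _ [] _ [] _ [] _ [] _ []. Qed.
Let le_sc : forall (a : R) x, 0 <= a -> le 0 x -> le 0 (a *: x).
Proof. by case: HBL => _ [] _ [] _ [] _ [] _ [] _ [] _ []. Qed.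
Let le_norm : forall x y, le (ab x) (ab y) -> `|x| <= `|y|.
Proof. by case: HBL => _ [] _ [] _ [] _ [] _ [] _ [] _ []. Qed.

Lemma joinxx x : join x x = x.
Proof. by have := joinKI x (join x x); rewrite meetKU. Qed.
Lemma lerefl x : le x x. Proof. exact: joinxx. Qed.
Lemma letrans x y z : le x y -> le y z -> le x z.
Proof. rewrite /bl_le => h1 h2; by rewrite -h2 joinA h1. Qed.
Arguments letrans {x y z}.
Lemma leanti x y : le x y -> le y x -> x = y.
Proof. rewrite /bl_le => h1 h2; by rewrite -h1 joinC h2. Qed.
Lemma lejl x y : le x (join x y).
Proof. by rewrite /bl_le joinA joinxx. Qed.
Lemma lejr x y : le y (join x y).
Proof. by rewrite joinC; apply: lejl. Qed.
Lemma lub x y z : le x z -> le y z -> le (join x y) z.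
Proof. rewrite /bl_le => h1 h2; by rewrite -joinA h2 h1. Qed.
Lemma le_meetE x y : le x y <-> meet x y = x.
Proof.
rewrite /bl_le; split => h; first by rewrite -h meetKU.
by rewrite -h joinC meetC joinKI.
Qed.
Lemma leml x y : le (meet x y) x.
Proof. by rewrite /bl_le joinC joinKI. Qed.
Lemma lemr x y : le (meet x y) y.
Proof. by rewrite /bl_le joinC meetC joinKI. Qed.
Lemma glb x y z : le z x -> le z y -> le z (meet x y).
Proof. move=> /le_meetE h1 /le_meetE h2; apply/le_meetE; by rewrite meetA h1 h2. Qed.

Lemma iso_join (f g : V -> V) :
  (forall x y, le x y -> le (f x) (f y)) -> (forall x y, le x y -> le (g x) (g y)) ->
  (forall x, g (f x) = x) -> (forall x, f (g x) = x) ->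
  forall x y, f (join x y) = join (f x) (f y).
Proof.
move=> hf hg gf fg x y; apply: leanti; last by apply: lub; apply: hf; [apply: lejl|apply: lejr].
rewrite -[X in le _ X]fg; apply: hf; apply: lub.
  by rewrite -[X in le X _]gf; apply: hg; apply: lejl.
by rewrite -[X in le X _]gf; apply: hg; apply: lejr.
Qed.
Lemma iso_meet (f g : V -> V) :
  (forall x y, le x y -> le (f x) (f y)) -> (forall x y, le x y -> le (g x) (g y)) ->
  (forall x, g (f x) = x) -> (forall x, f (g x) = x) ->
  forall x y, f (meet x y) = meet (f x) (f y).
Proof.
move=> hf hg gf fg x y; apply: leanti; first by apply: glb; apply: hf; [apply: leml|apply: lemr].
rewrite -[X in le X _]fg; apply: hf; apply: glb.
  by rewrite -[X in le _ X]gf; apply: hg; apply: leml.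
by rewrite -[X in le _ X]gf; apply: hg; apply: lemr.
Qed.

Lemma join_add x y z : join x y + z = join (x + z) (y + z).
Proof.
apply: (@iso_join (fun x => x + z) (fun x => x - z)) => //.
- by move=> a b h; apply: le_add.
- by move=> a b h; apply: le_add.
- by move=> a; rewrite addrK.
- by move=> a; rewrite subrK.
Qed.


Lemma le_addE x y z : le x y <-> le (x + z) (y + z).
Proof.
split; first exact: le_add.
by move=> /(le_add _ _ (- z)); rewrite !addrK.
Qed.

Lemma le_opp x y : le x y -> le (- y) (- x).
Proof.
move=> /(le_add _ _ (- x - y)).
have -> : x + (- x - y) = - y by rewrite addrA subrr add0r.
by have -> : y + (- x - y) = - x by rewrite addrC addrNK.
Qed.

Lemma opp_meet x y : - meet x y = join (- x) (- y).
Proof.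
apply: leanti.
  rewrite -[X in le _ X]opprK; apply: le_opp; apply: glb.
    by rewrite -[X in le _ X]opprK; apply: le_opp; apply: lejl.
  by rewrite -[X in le _ X]opprK; apply: le_opp; apply: lejr.
by apply: lub; apply: le_opp; [apply: leml | apply: lemr].
Qed.

Lemma join_meet_add x y : join x y + meet x y = x + y.
Proof.
apply: (addIr (- meet x y)); rewrite addrK opp_meet addrC join_add.
by rewrite addKr (addrC x y) addKr joinC.
Qed.

Lemma le_scale (a : R) x y : 0 <= a -> le x y -> le (a *: x) (a *: y).
Proof.
move=> a0 /(le_add _ _ (- x)); rewrite subrr => /(le_sc _ _ a0).
move=> /(le_add _ _ (a *: x)).
by rewrite add0r scalerBr subrK.
Qed.

Lemma join_scale (a : R) x y : 0 < a -> a *: join x y = join (a *: x) (a *: y).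
Proof.
move=> a0; apply: (@iso_join (fun x => a *: x) (fun x => a^-1 *: x)).
- by move=> u v; apply: le_scale; rewrite ltW.
- by move=> u v; apply: le_scale; rewrite ltW // invr_gt0.
- by move=> u; rewrite scalerA mulVf ?scale1r // gt_eqF.
- by move=> u; rewrite scalerA mulfV ?scale1r // gt_eqF.
Qed.

Lemma meet_scale (a : R) x y : 0 < a -> a *: meet x y = meet (a *: x) (a *: y).
Proof.
move=> a0; apply: (@iso_meet (fun x => a *: x) (fun x => a^-1 *: x)).
- by move=> u v; apply: le_scale; rewrite ltW.
- by move=> u v; apply: le_scale; rewrite ltW // invr_gt0.
- by move=> u; rewrite scalerA mulVf ?scale1r // gt_eqF.
- by move=> u; rewrite scalerA mulfV ?scale1r // gt_eqF.
Qed.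

Lemma half_double (v : V) : (2 : R)^-1 *: (v + v) = v.
Proof.
by rewrite -mulr2n -(scaler_nat 2 v) scalerA mulVf ?scale1r // pnatr_eq0.
Qed.

Lemma abs_ge0 x : le 0 (ab x).
Proof.
have h1 : le 0 (ab x + x).
  rewrite -(addNr x); apply: le_add; exact: lejr.
have h2 : le (ab x + x) (ab x + ab x).
  by rewrite addrC [X in le _ X]addrC; apply: le_add; apply: lejl.
have h2i : 0 <= (2 : R)^-1 by rewrite invr_ge0.
have := le_scale _ _ _ h2i (letrans h1 h2).
by rewrite scaler0 half_double.
Qed.

Lemma abs_pos x : le 0 x -> ab x = x.
Proof.
move=> h; rewrite /bl_abs joinC; apply: letrans (h).
by rewrite -oppr0; apply: le_opp.
Qed.

Lemma abs_abs x : ab (ab x) = ab x.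
Proof. exact/abs_pos/abs_ge0. Qed.

Lemma abs_scale (a : R) x : 0 < a -> ab (a *: x) = a *: ab x.
Proof. by move=> a0; rewrite /bl_abs join_scale // scalerN. Qed.

Lemma norm_abs x : `|ab x| = `|x|.
Proof.
by apply/eqP; rewrite eq_le !le_norm // abs_abs; apply: lerefl.
Qed.

Lemma norm_mono x y : le 0 x -> le x y -> `|x| <= `|y|.
Proof.
move=> h0 h; apply: le_norm; rewrite abs_pos // abs_pos //.
exact: letrans h.
Qed.

Lemma abs_sum x y : ab x + ab y = join (ab (x + y)) (ab (x - y)).
Proof.
rewrite /bl_abs join_add addrC !join_add [- x + _]addrC join_add.
have -> : y + x = x + y by rewrite addrC.
have -> : - y + x = x - y by rewrite addrC.
have -> : y + - x = - (x - y) by rewrite opprB addrC.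
have -> : - y + - x = - (x + y) by rewrite opprD addrC.
rewrite -!joinA; congr join.
by rewrite [RHS]joinC -joinA.
Qed.

Lemma keyK g h : ab (ab g - ab h) = meet (ab (g + h)) (ab (g - h)).
Proof.
set a := ab (g + h); set b := ab (g - h); set p := ab g; set q := ab h.
have hj : join a b = p + q by rewrite abs_sum.
have hs : a + b = 2 *: join p q.
  rewrite abs_sum.
  have -> : g + h + (g - h) = 2 *: g.
    by rewrite addrACA subrr addr0 scaler_nat mulr2n.
  have -> : g + h - (g - h) = 2 *: h.
    by rewrite opprB [h - g]addrC addrA [g + h - g]addrAC subrr add0r scaler_nat mulr2n.
  by rewrite !abs_scale ?ltr0n // [RHS]join_scale ?ltr0n.
have hm : meet a b = a + b - join a b.
  by rewrite -(join_meet_add a b) addrAC subrr add0r.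
have -> : ab (p - q) = join (p - q) (- (p - q)) by []. 
rewrite hm hs hj join_scale ?ltr0n // join_add; congr join.
  by rewrite scaler_nat mulr2n opprD addrA addrK.
by apply/esym; rewrite scaler_nat mulr2n opprD addrA addrAC addrK opprB addrC.
Qed.


Lemma meet_mono x y y' : le y y' -> le (meet x y) (meet x y').
Proof. by move=> h; apply: glb; [apply: leml | apply: letrans h; apply: lemr]. Qed.

Lemma key_bound (r : R) (H : set V) (HH : is_subspace H) (hr0 : 0 < r)
  (NB : ~ exists e f : V, [/\ H e, H f, `|e| = 1, `|f| = 1 &
        `|meet (ab e) (ab f)| < r]) e f :
  H e -> H f -> r * Num.min `|e| `|f| <= `|meet (ab e) (ab f)|.
Proof.
case: HH => H0 Hadd Hsc.
wlog hle : e f / `|e| <= `|f|.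
  move=> W He Hf; case: (leP `|e| `|f|) => h; first by have := W e f h He Hf; rewrite (min_l h).
  by have := W f e (ltW h) Hf He; rewrite (min_l (ltW h)) meetC.
move=> He Hf; rewrite (min_l hle).
have := normr_ge0 e; rewrite le_eqVlt => /orP [/eqP e0 | epos].
  by rewrite -e0 mulr0.
set a := `|e| in hle epos *; set b := `|f| in hle *.
have bpos : 0 < b by apply: lt_le_trans hle.
have hr : r <= `|meet (ab (a^-1 *: e)) (ab (b^-1 *: f))|.
  rewrite leNgt; apply/negP => hlt; apply: NB.
  exists (a^-1 *: e), (b^-1 *: f); split => //; try by apply: Hsc.
    by rewrite normrZ gtr0_norm ?invr_gt0 // mulVf ?gt_eqF.
  by rewrite normrZ gtr0_norm ?invr_gt0 // mulVf ?gt_eqF.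
have M : a *: meet (ab (a^-1 *: e)) (ab (b^-1 *: f)) = meet (ab e) ((a / b) *: ab f).
  rewrite meet_scale // !abs_scale ?invr_gt0 // !scalerA mulfV ?gt_eqF //.
  by rewrite scale1r.
have ab1 : a / b <= 1 by rewrite ler_pdivrMr // mul1r.
have ab0 : 0 <= a / b by rewrite divr_ge0 // ltW.
have le1 : le ((a / b) *: ab f) (ab f).
  have h1 : 0 <= 1 - a / b by rewrite subr_ge0.
  have := le_sc _ _ h1 (abs_ge0 f).
  move/(le_add _ _ ((a / b) *: ab f)).
  by rewrite add0r scalerBl scale1r subrK.
have hn : `|meet (ab e) ((a / b) *: ab f)| <= `|meet (ab e) (ab f)|.
  apply: norm_mono; last exact: meet_mono.
  by apply: glb; [apply: abs_ge0 | apply: le_sc => //; apply: abs_ge0].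
apply: le_trans hn.
rewrite -M normrZ gtr0_norm // mulrC.
by apply: ler_wpM2l => //; apply: ltW.
Qed.

End Riesz.

Theorem mainTheorem17 (R : realType) (V : completeNormedModType R)
  (join meet : V -> V -> V) (HBL : is_banach_lattice join meet)
  (H : set V) (HH : is_subspace H) (r : R) (hr0 : 0 < r) (hr1 : r <= 1) :
  (~ exists e f : V, [/\ H e, H f, `|e| = 1, `|f| = 1 &
        `|meet (bl_abs join e) (bl_abs join f)| < r])
  <-> SPR join (r^-1) H.
Proof.
have HH' := HH; case: HH' => H0 Hadd Hsc.
have Hsub : forall x y, H x -> H y -> H (x - y).
  by move=> x y hx hy; apply: Hadd => //; rewrite -scaleN1r; apply: Hsc.
split.
  move=> NB g h Hg Hh.
  rewrite -[`|bl_abs join _ - _|](norm_abs _ _ _ _ HBL) (keyK _ _ _ _ HBL) ler_pdivlMl //.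
  exact: (key_bound _ _ _ _ HBL _ _ HH hr0 NB _ _ (Hadd _ _ Hg Hh) (Hsub _ _ Hg Hh)).
move=> S [e [f [He Hf e1 f1 hlt]]].
have := S ((2 : R)^-1 *: (e + f)) ((2 : R)^-1 *: (e - f))
  (Hsc _ _ (Hadd _ _ He Hf)) (Hsc _ _ (Hsub _ _ He Hf)).
have -> : (2 : R)^-1 *: (e + f) + (2 : R)^-1 *: (e - f) = e.
  by rewrite -scalerDr addrACA subrr addr0 half_double.
have -> : (2 : R)^-1 *: (e + f) - (2 : R)^-1 *: (e - f) = f.
  rewrite -scalerBr opprB [f - e]addrC addrA [e + f - e]addrAC subrr add0r.
  exact: half_double.
rewrite -[`|bl_abs join _ - _|](norm_abs _ _ _ _ HBL) (keyK _ _ _ _ HBL).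
have -> : (2 : R)^-1 *: (e + f) + (2 : R)^-1 *: (e - f) = e.
  by rewrite -scalerDr addrACA subrr addr0 half_double.
have -> : (2 : R)^-1 *: (e + f) - (2 : R)^-1 *: (e - f) = f.
  rewrite -scalerBr opprB [f - e]addrC addrA [e + f - e]addrAC subrr add0r.
  exact: half_double.
rewrite e1 f1 minxx ler_pdivlMl // mulr1 => hle.
by have := lt_le_trans hlt hle; rewrite ltxx.
Qed.
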